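(* Let $z\ge 1$, $r\ge 1$ and $g\ge 3$ be integers. Then there exists a $[z,r;g]$-mixed graph.
   Context: A mixed graph is a finite graph that may contain both (undirected) edges and (directed) arcs. A $[z,r;g]$-mixed graph is a mixed graph in which every vertex is the tail of exactly $z$ arcs, the head of exactly $z$ arcs, and is incident with exactly $r$ edges, and whose girth is $g$. Walks are sequences $(v_0,\dots,v_n)$ where for each $i$, $v_iv_{i+1}$ is an edge or $(v_i,v_{i+1})$ is an arc (arcs may only be traversed in their direction, edges in either direction); a cycle is a closed such walk with no repeated vertex other than $v_0=v_n$ and no edge or arc used twice; the girth is the length of a shortest cycle. *)

(* Defs.v *)
From mathcomp Require Import all_boot.
Set Implicit Arguments. Unset Strict Implicit. Unset Printing Implicit Defensive.

Record mixed_graph (V : finType) := MixedGraph {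
  medge : rel V;
  marc : rel V;
  medge_sym : symmetric medge;
  medge_irr : irreflexive medge;
  marc_irr : irreflexive marc }.

Definition step_ok (V : finType) (G : mixed_graph V) (b : bool) (x y : V) : bool :=
  if b then marc G x y else medge G x y.

Definition same_item (V : finType) (b : bool) (x y : V) (b' : bool) (x' y' : V) : bool :=
  (b == b') &&
  (if b then (x == x') && (y == y')
   else ((x == x') && (y == y')) || ((x == y') && (y == x'))).

Definition is_cycle (V : finType) (G : mixed_graph V) (n : nat)
    (f : 'I_n -> V) (k : 'I_n -> bool) : Prop :=
  0 < n /\ injective f /\
  (forall i : 'I_n, step_ok G (k i) (f i) (f (ordS i))) /\
  (forall i j : 'I_n, i != j ->
     ~~ same_item (k i) (f i) (f (ordS i)) (k j) (f j) (f (ordS j))).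

Definition has_cycle_of_length (V : finType) (G : mixed_graph V) (n : nat) : Prop :=
  exists (f : 'I_n -> V) (k : 'I_n -> bool), is_cycle G f k.

Definition girth_is (V : finType) (G : mixed_graph V) (g : nat) : Prop :=
  has_cycle_of_length G g /\ (forall n, n < g -> ~ has_cycle_of_length G n).

Definition is_zrg_mixed_graph (V : finType) (G : mixed_graph V) (z r g : nat) : Prop :=
  (forall x : V,
     #|[set y | marc G x y]| = z /\
     #|[set y | marc G y x]| = z /\
     #|[set y | medge G x y]| = r) /\
  girth_is G g.

(* Main.v *)
Require Import Defs.
From mathcomp Require Import all_boot.
From mathcomp Require Import all_boot fingroup perm.
Set Implicit Arguments. Unset Strict Implicit. Unset Printing Implicit Defensive.

Definition red r (s : seq 'I_r) := sorted (fun x y => x != y) s.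
Definition ext (L r : nat) (a : 'I_r) (s : seq 'I_r) :=
  if size s < L then a :: s else s.
Definition stp (L r : nat) (a : 'I_r) (s : seq 'I_r) :=
  if s is b :: t then (if b == a then t else ext L a s) else ext L a s.
Definition sw (L r : nat) (a : 'I_r) (s : seq 'I_r) :=
  if red s then stp L a s else s.

Lemma sw_size L r (a : 'I_r) s : size s <= L -> size (sw L a s) <= L.
Proof.
rewrite /sw /stp /ext; case: (red s) => // hs.
case: s hs => [|b t] /= hs.
  by case: ifP.
case: ifP => _; first by apply: leq_trans hs.
by case: ifP.
Qed.

Lemma swK L r (a : 'I_r) s : size s <= L -> sw L a (sw L a s) = s.
Proof.
move=> hs; rewrite /sw.
case rs: (red s); last by rewrite rs.
case: s rs hs => [|b t] rs hs.
  by rewrite /stp /ext /=; case: (posnP L) => [->|h] //=; rewrite eqxx.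
case: (eqVneq b a) => [eba|nba].
  subst b.
  have -> : stp L a (a :: t) = t by rewrite /stp eqxx.
  have rt : red t by move: rs; rewrite /red /=; apply: path_sorted.
  rewrite rt /stp /ext.
  case: t rs rt hs => [|c u] rs rt hs /=.
    by move: hs => /= ->.
  have -> : (c == a) = false.
    by move: rs; rewrite /red /= => /andP [] /negPf; rewrite eq_sym.
  by move: hs => /= ->.
have -> : stp L a (b :: t) = ext L a (b :: t) by rewrite /stp ifN_eq.
rewrite /ext; case: (ltnP (size (b :: t)) L) => hl; last first.
  by rewrite rs /stp ifN_eq // /ext ltnNge hl.
have -> : red [:: a, b & t].
  by move: rs; rewrite /red /= => ->; rewrite eq_sym nba.
by rewrite /stp eqxx.
Qed.

Definition sigb L r (a : 'I_r) (w : L.-bseq 'I_r) : L.-bseq 'I_r :=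
  Bseq (sw_size a (size_bseq w)).

Lemma sigbK L r (a : 'I_r) : involutive (@sigb L r a).
Proof. move=> w; apply: val_inj => /=; exact: swK (size_bseq w). Qed.

Definition sigma L r (a : 'I_r) : {perm L.-bseq 'I_r} := perm (inv_inj (sigbK a)).

Lemma sigmaE L r (a : 'I_r) w : val (sigma L a w) = sw L a (val w).
Proof. by rewrite permE. Qed.

Lemma sigma2 L r (a : 'I_r) : (sigma L a * sigma L a)%g = 1%g.
Proof. by apply/permP => w; rewrite permM perm1 !permE sigbK. Qed.

Lemma sigma_nil L r (a : 'I_r) : 0 < L -> val (sigma L a [bseq]) = [:: a].
Proof. by move=> hL; rewrite sigmaE /sw /= /stp /ext /= hL. Qed.
Definition Vt g z r := (('I_g * 'I_z) * {perm g.-bseq 'I_r})%type.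
Definition med g z r : rel (Vt g z r) := fun x y =>
  (x.1 == y.1) && [exists a : 'I_r, y.2 == (x.2 * sigma g a)%g].
Definition mar g z r : rel (Vt g z r) := fun x y =>
  (y.1.1 == ordS x.1.1) && (y.2 == x.2).

Lemma med_imp g z r (x y : Vt g z r) : med x y -> med y x.
Proof.
case/andP=> /eqP e /existsP [a /eqP ha]; apply/andP; split; first by rewrite e.
apply/existsP; exists a; by rewrite ha -mulgA sigma2 mulg1.
Qed.

Lemma med_sym g z r : symmetric (@med g z r).
Proof. by move=> x y; apply/idP/idP; apply: med_imp. Qed.

Lemma med_irr g z r (hg : 0 < g) : irreflexive (@med g z r).
Proof.
move=> x; apply/negP; case/andP=> _ /existsP [a /eqP ha].
have := congr1 (fun p : {perm _} => val (p (x.2^-1 [bseq])%g)) ha.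
by rewrite permM permKV sigma_nil.
Qed.

Lemma mar_irr g z r (hg : 1 < g) : irreflexive (@mar g z r).
Proof.
move=> x; apply/negP; case/andP=> /eqP h _.
have := congr1 val h => /=; case: x h => [[l c] p] /= _.
case: (ltngtP l.+1 g) => hl.
- by rewrite modn_small // => /n_Sn.
- by move: (ltn_ord l) hl => a b; have := leq_trans a b; rewrite ltnn.
- by rewrite hl modnn => h0; move: hl hg; rewrite h0 => <-.
Qed.

Definition MG g z r (h1 : 0 < g) (h2 : 1 < g) : mixed_graph (Vt g z r) :=
  MixedGraph (@med_sym g z r) (@med_irr g z r h1) (@mar_irr g z r h2).

Lemma inord_over m : val (inord m.+1 : 'I_m.+1) = 0.
Proof. by rewrite /inord /insubd insubF ?ltnn. Qed.

Lemma no_short g z r (h1 : 0 < g) (h2 : 1 < g) n (f : 'I_n -> Vt g z r) k :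
  is_cycle (MG z r h1 h2) f k -> n < g -> False.
Proof.
case=> [n0 [finj [hstep hdist]]] ng.
have hl : forall i, val (f (ordS i)).1.1 = (val (f i).1.1 + k i) %% g.
  move=> i; have := hstep i; rewrite /step_ok; case: (k i) => /=.
  - by case/andP => /eqP -> _; rewrite addn1.
  - by case/andP => /eqP <- _; rewrite addn0 modn_small.
have hK : \sum_i (k i : nat) = 0.
  have e1 : \sum_i val (f i).1.1 = \sum_i val (f (ordS i)).1.1.
    by rewrite (reindex_inj (@ordS_inj n)).
  have e2 : (\sum_i val (f i).1.1 + \sum_i (k i : nat)) %% g
            = (\sum_i val (f i).1.1 + 0) %% g.
    by rewrite addn0 -big_split /= e1 (eq_bigr _ (fun i _ => hl i)) modn_summ.
  move/eqP: e2; rewrite eqn_modDl mod0n => /eqP hmod.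
  have Kn : \sum_i (k i : nat) <= n.
    apply: (@leq_trans (\sum_(i < n) 1)); first by apply: leq_sum => i _; apply: leq_b1.
    by rewrite sum_nat_const card_ord muln1.
  by rewrite -(modn_small (leq_ltn_trans Kn ng)).
have hk : forall i, k i = false.
  by move=> i; move/eqP: hK; rewrite sum_nat_eq0 => /forallP /(_ i); case: (k i).
clear hl hK.
case: n f k finj hstep hdist ng n0 hk => [//|m] f k finj hstep hdist ng _ hk.
pose F t := f (inord t).
have hS : forall t, t < m.+1 -> ordS (inord t : 'I_m.+1) = inord t.+1.
  move=> t ht; apply: ord_inj => /=; rewrite inordK //.
  case: (ltngtP t.+1 m.+1) => h.
  - by rewrite modn_small // inordK.
  - by rewrite ltnNge ht in h.
  - by rewrite h modnn inord_over.
have hF0 : F m.+1 = F 0.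
  by rewrite /F; congr f; apply: ord_inj; rewrite inord_over inordK.
have hE : forall t, t < m.+1 -> exists a,
    (F t.+1).1 = (F t).1 /\ (F t.+1).2 = ((F t).2 * sigma g a)%g.
  move=> t ht; have := hstep (inord t); rewrite hk /= hS //.
  case/andP => /eqP e /existsP [a /eqP ha]; exists a.
  by rewrite /F -e ha.
pose x0 := (((F 0).2)^-1 [bseq])%g.
pose w t := val ((F t).2 x0).
have hw0 : w 0 = [::] by rewrite /w /x0 permKV.
have hwS : forall t a, (F t.+1).2 = ((F t).2 * sigma g a)%g -> w t.+1 = sw g a (w t).
  by move=> t a e; rewrite /w e permM sigmaE.
have hw : forall t, t.+1 <= m.+1 -> exists a u, [/\ w t.+1 = a :: u, red (w t.+1),
    size (w t.+1) = t.+1 & (F t.+1).2 = ((F t).2 * sigma g a)%g /\ (F t.+1).1 = (F t).1].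
  elim=> [|t IH] ht.
  - case: (hE 0 ht) => a [e1 e2]; exists a, [::].
    have -> : w 1 = [:: a] by rewrite (hwS 0 a e2) hw0 /sw /= /stp /ext /= h1.
    by [].
  - have ht' : t.+1 <= m.+1 by apply: ltnW.
    case: (IH ht') => a [u [ew rw sz [e2 e1]]].
    case: (hE t.+1 ht) => b [f1 f2].
    case: (eqVneq b a) => [eba|nba].
    + subst b; exfalso.
      have eF : F t.+2 = F t.
        rewrite [F t.+2]surjective_pairing [F t]surjective_pairing f1 e1 f2 e2.
        by rewrite -mulgA sigma2 mulg1.
      have ij : (inord t : 'I_m.+1) != inord t.+1.
        by apply/eqP => /(congr1 (@nat_of_ord _)); rewrite !inordK ?(ltnW ht) // => /n_Sn.
      have := hdist _ _ ij; rewrite !hk !hS // -/(F t) -/(F t.+1) -/(F t.+2) eF.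
      by rewrite /same_item /= !eqxx orbT.
    + exists b, (a :: u); rewrite (hwS _ _ f2) ew.
      have -> : sw g b (a :: u) = [:: b, a & u].
        rewrite /sw -ew rw ew /stp eq_sym (negPf nba) /ext -ew sz.
        by rewrite (leq_trans ht (ltnW ng)).
      split => //=.
      by move: rw; rewrite ew /red /= => ->; rewrite andbT.
      by move: sz; rewrite ew /= => ->.
case: (hw m (leqnn _)) => a [u [ew _ _ _]].
have : w m.+1 = w 0 by rewrite /w hF0.
by rewrite ew hw0.
Qed.

Lemma out_deg g z r (x : Vt g z r) : #|[set y | mar x y]| = z.
Proof.
have -> : [set y | mar x y] = [set ((ordS x.1.1, c), x.2) | c : 'I_z].
  apply/setP => y; rewrite inE; apply/idP/imsetP.
  - case/andP => /eqP e1 /eqP e2; exists y.1.2 => //.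
    by case: y e1 e2 => [[l c] p] /= -> ->.
  - by case=> c _ ->; rewrite /mar /= !eqxx.
by rewrite card_imset ?card_ord // => c d [].
Qed.

Lemma in_deg g z r (x : Vt g z r) : #|[set y | mar y x]| = z.
Proof.
have -> : [set y | mar y x] = [set ((ord_pred x.1.1, c), x.2) | c : 'I_z].
  apply/setP => y; rewrite inE; apply/idP/imsetP.
  - case/andP => /eqP e1 /eqP e2; exists y.1.2 => //.
    case: y e1 e2 => [[l c] p] /= -> ->.
    by rewrite ordSK.
  - by case=> c _ ->; rewrite /mar /= ord_predK !eqxx.
by rewrite card_imset ?card_ord // => c d [].
Qed.

Lemma edge_deg g z r (hg : 0 < g) (x : Vt g z r) : #|[set y | med x y]| = r.
Proof.
have -> : [set y | med x y] = [set (x.1, (x.2 * sigma g a)%g) | a : 'I_r].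
  apply/setP => y; rewrite inE; apply/idP/imsetP.
  - case/andP => /eqP e1 /existsP [a /eqP e2]; exists a => //.
    by case: y e1 e2 => [l p] /= -> ->.
  - case=> a _ ->; rewrite /med /= eqxx /=; apply/existsP; by exists a.
rewrite card_imset ?card_ord // => a b [] /mulgI e.
have := congr1 (fun p : {perm _} => val (p [bseq])) e.
by rewrite /= !sigma_nil // => [] [].
Qed.

Theorem theorem1 (z r g : nat) (hz : 1 <= z) (hr : 1 <= r) (hg : 3 <= g) :
  exists (V : finType) (G : mixed_graph V), is_zrg_mixed_graph G z r g.
Proof.
have h1 : 0 < g by apply: leq_trans hg.
have h2 : 1 < g by apply: leq_trans hg.
exists (Vt g z r), (MG z r h1 h2); split.
  move=> x; split; first exact: out_deg.
  split; first exact: in_deg.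
  exact: edge_deg.
split.
  exists (fun i => ((i, Ordinal hz), 1%g)), (fun _ => true).
  split => //; split.
    by move=> i j [].
  split.
    by move=> i; rewrite /step_ok /= /mar /= !eqxx.
  move=> i j hij; rewrite /same_item /=.
  by apply/negP => /andP [/andP [/eqP [] e _] _]; rewrite e eqxx in hij.
move=> n hn [f [k hc]].
exact: (no_short hc hn).
Qed.
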